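(* Let $N=(G=(V,E),\sigma,u,s)$ be a skew-symmetric network, $f$ an IS-flow in $N$, $g$ a shortest IS-flow in the network $(G^+,u_f)$, and $f':=f\oplus g$. Let $k$ and $k'$ be the minimum numbers of arcs of an r-augmenting path for $f$ and for $f'$, respectively (with $\min\emptyset=+\infty$). Then $k'\ge k$. Moreover, if $g$ is a shortest blocking IS-flow in $(G^+,u_f)$, then $k'>k$.
   Context: A skew-symmetric graph is a finite directed graph $G=(V,E)$ (parallel arcs allowed) with a map $\sigma$ of $V\cup E$ onto itself such that $\sigma(x)\ne x$, $\sigma(\sigma(x))=x$ for all $x$, $\sigma(V)=V$, and for each arc $a$ from $v$ to $w$, $\sigma(a)$ is an arc from $\sigma(w)$ to $\sigma(v)$. A function on arcs is symmetric if it takes equal values on $a$ and $\sigma(a)$. A skew-symmetric network $(H,\sigma,h,s)$ has a symmetric capacity $h:$ arcs $\to\mathbb Z_{\ge0}$ and source $s$, sink $s'=\sigma(s)$. A flow is a nonnegative function bounded by the capacity with conservation at all nodes other than $s,s'$; its value $|g|$ is the net outflow at $s$. An IS-flow is an integer-valued symmetric flow. $G^+=(V,E^+)$ is obtained from $G$ by adding for each arc $a=(x,y)\in E$ a reverse arc $a^R=(y,x)$, with $\sigma(a^R)=(\sigma(a))^R$; residual capacities $u_f(a)=u(a)-f(a)$ for $a\in E$, $u_f(a^R)=f(a)$; $(G^+,u_f)$ is a skew-symmetric network. For an IS-flow $g$ in $(G^+,u_f)$, $f\oplus g$ is the IS-flow in $N$ given by $(f\oplus g)(a)=f(a)+g(a)-g(a^R)$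 for $a\in E$. For symmetric nonnegative integer $h$, a path $P$ is $h$-regular if $h(a)>0$ for all arcs $a$ of $P$ and $h(a)\ge2$ for every arc $a$ of $P$ whose mate $\sigma(a)$ is also on $P$. An r-augmenting path for $f$ is a $u_f$-regular path from $s$ to $s'$ in $G^+$. A regular path is one containing no pair of arcs $a,\sigma(a)$. The split-graph $S(H,h)$ replaces each arc $a=(x,y)$ by parallel arcs $a_1,a_2$ from $x$ to $y$ with capacities $\lceil h(a)/2\rceil,\lfloor h(a)/2\rfloor$, deleting zero-capacity arcs, with $\sigma(a_i)=(\sigma(a))_i$. $\mathrm{r\text{-}dist}_{S(H,h)}(s,s')$ is the minimum number of arcs of a regular $s$ to $s'$ path in $S(H,h)$ ($+\infty$ if none). For an IS-flow $g$ in $(H,h)$ with arc set $W$: $g$ is shortest if $\sum_{e\in W}g(e)=|g|\cdot\mathrm{r\text{-}dist}_{S(H,h)}(s,s')$; $g$ is shortest blocking if it is shortest and $\mathrm{r\text{-}dist}_{S(H,h-g)}(s,s')>\mathrm{r\text{-}dist}_{S(H,h)}(s,s')$. *)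

(* Defs.v *)
From Stdlib Require Import ClassicalEpsilon.
From mathcomp Require Import all_boot all_order all_algebra.
Set Implicit Arguments. Unset Strict Implicit. Unset Printing Implicit Defensive.
Import GRing.Theory Num.Theory.

(* A directed graph is given by a finite vertex type V, a finite arc type A
   (parallel arcs allowed) and tail/head maps. *)

Section Generic.
Variables (V A : finType) (tl hd : A -> V).

Definition skew_symmetric (sv : V -> V) (sa : A -> A) : Prop :=
  [/\ involutive sv, forall v, sv v != v, involutive sa, forall a, sa a != a
    & forall a, tl (sa a) = sv (hd a) /\ hd (sa a) = sv (tl a)].

Fixpoint is_path (x t : V) (p : seq A) : bool :=
  match p with
  | [::] => x == t
  | a :: p' => (tl a == x) && is_path (hd a) t p'
  end.

Definition symmetric_fun (sa : A -> A) (h : A -> nat) : Prop :=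
  forall a, h (sa a) = h a.

Definition is_ISflow (sv : V -> V) (sa : A -> A) (h : A -> nat) (s : V)
  (g : A -> nat) : Prop :=
  [/\ symmetric_fun sa g, forall a, g a <= h a
    & forall v, v != s -> v != sv s ->
        \sum_(a | tl a == v) g a = \sum_(a | hd a == v) g a].

Definition flow_value (s : V) (g : A -> nat) : int :=
  (Posz (\sum_(a | tl a == s) g a) - Posz (\sum_(a | hd a == s) g a))%R.

Definition h_regular (sa : A -> A) (h : A -> nat) (p : seq A) : bool :=
  all (fun a => 0 < h a) p && all (fun a => (sa a \in p) ==> (2 <= h a)) p.

Definition regular (sa : A -> A) (p : seq A) : bool :=
  all (fun a => sa a \notin p) p.

End Generic.

(* minimum length of a sequence satisfying P; None stands for +infinity *)
Definition mindist (T : finType) (P : seq T -> bool) : option nat :=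
  match excluded_middle_informative (exists n, [exists t : n.-tuple T, P t]) with
  | left H => Some (ex_minn H)
  | right _ => None
  end.

Definition ole (x y : option nat) : bool :=
  match x, y with
  | _, None => true
  | None, Some _ => false
  | Some m, Some n => m <= n
  end.
Definition olt (x y : option nat) : bool :=
  match x, y with
  | None, _ => false
  | Some _, None => true
  | Some m, Some n => m < n
  end.

(* The graph G^+ : arcs inl a = a, inr a = a^R *)
Section Plus.
Variables (V A : finType) (tl hd : A -> V) (sa : A -> A).
Definition tlP (e : A + A) : V := match e with inl a => tl a | inr a => hd a end.
Definition hdP (e : A + A) : V := match e with inl a => hd a | inr a => tl a end.
Definition saP (e : A + A) : A + A :=
  match e with inl a => inl (sa a) | inr a => inr (sa a) end.
Definition resid (u f : A -> nat) (e : A + A) : nat :=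
  match e with inl a => u a - f a | inr a => f a end.
Definition oplus (f : A -> nat) (g : A + A -> nat) (a : A) : nat :=
  f a + g (inl a) - g (inr a).
End Plus.

(* The split graph S(H,h): arc (a,true) = a_1 with capacity ceil(h a/2),
   (a,false) = a_2 with capacity floor(h a/2); zero-capacity arcs deleted;
   sigma(a_i) = (sigma a)_i. *)
Section Split.
Variables (V A : finType) (tl hd : A -> V) (sa : A -> A).
Definition splitcap (h : A -> nat) (e : A * bool) : nat :=
  if e.2 then uphalf (h e.1) else (h e.1)./2.
Definition tlS (e : A * bool) := tl e.1.
Definition hdS (e : A * bool) := hd e.1.
Definition saS (e : A * bool) : A * bool := (sa e.1, e.2).
Definition rdist_split (sv : V -> V) (h : A -> nat) (s : V) : option nat :=
  mindist (fun p : seq (A * bool) =>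
    [&& is_path tlS hdS s (sv s) p, all (fun e => 0 < splitcap h e) p
      & regular saS p]).
(* shortest IS-flow (convention 0 * oo = 0, n * oo = oo for n > 0) *)
Definition shortest (sv : V -> V) (h : A -> nat) (s : V) (g : A -> nat) : Prop :=
  match rdist_split sv h s with
  | Some d => Posz (\sum_a g a) = (flow_value tl hd s g * Posz d)%R
  | None => \sum_a g a = 0
  end.
Definition shortest_blocking (sv : V -> V) (h : A -> nat) (s : V) (g : A -> nat)
  : Prop :=
  shortest sv h s g /\
  olt (rdist_split sv h s) (rdist_split sv (fun a => h a - g a) s).
End Split.

(* minimum number of arcs of an r-augmenting path for f *)
Definition raug_dist (V A : finType) (tl hd : A -> V) (sv : V -> V) (sa : A -> A)
  (u : A -> nat) (s : V) (f : A -> nat) : option nat :=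
  mindist (fun p : seq (A + A) =>
    is_path (tlP tl hd) (hdP tl hd) s (sv s) p &&
    h_regular (saP sa) (resid u f) p).

(* Main.v *)
Require Import Defs.
From mathcomp Require Import all_boot all_order all_algebra.
From mathcomp Require Import zify ring lra.
From Stdlib Require Import ClassicalEpsilon.
From Stdlib Require FunctionalExtensionality.
Set Implicit Arguments. Unset Strict Implicit. Unset Printing Implicit Defensive.
Import GRing.Theory Num.Theory.

Module M1.

Section MinDist.
Variable T : finType.
Variable P : seq T -> bool.

Lemma mindist_le (p : seq T) : P p -> exists n, mindist P = Some n /\ n <= size p.
Proof.
move=> Pp; rewrite /mindist; case: excluded_middle_informative => [H|H].
  eexists; split; first reflexivity.
  case: ex_minnP => m Hm Hmin; apply: Hmin.
  by apply/existsP; exists (in_tuple p).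
by exfalso; apply: H; exists (size p); apply/existsP; exists (in_tuple p).
Qed.

Lemma mindist_some n : mindist P = Some n ->
  (exists p, P p /\ size p = n) /\ (forall p, P p -> n <= size p).
Proof.
rewrite /mindist; case: excluded_middle_informative => [H|H] //.
case: ex_minnP => m /existsP [t Pt] Hmin [<-]; split.
  by exists t; rewrite size_tuple.
by move=> p Pp; apply: Hmin; apply/existsP; exists (in_tuple p).
Qed.

Lemma mindist_none : mindist P = None -> forall p, ~~ P p.
Proof.
move=> H p; apply/negP => Pp; have [n [E _]] := mindist_le Pp.
by rewrite E in H.
Qed.
End MinDist.

Section Paths.
Variables (V A : finType) (tl hd : A -> V).

Lemma is_path_cat x t p q :
  is_path tl hd x t (p ++ q) = [exists m, is_path tl hd x m p && is_path tl hd m t q].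
Proof.
elim: p x => [|a p IH] x /=.
  apply/idP/existsP => [H|[m /andP[/eqP -> //]]]; by exists x; rewrite eqxx.
rewrite IH; apply/andP/existsP => [[Ha /existsP[m Hm]]|[m /andP[/andP[Ha Hp] Hq]]].
  by exists m; rewrite Ha.
by split => //; apply/existsP; exists m; rewrite Hp.
Qed.

Lemma is_path_suffix x t p a q :
  is_path tl hd x t (p ++ a :: q) -> is_path tl hd (tl a) t (a :: q).
Proof.
elim: p x => [|b p IH] x /=; first by case/andP => /eqP -> ->; rewrite eqxx.
by case/andP => _; apply: IH.
Qed.

Lemma shortcut x t p : is_path tl hd x t p ->
  exists q, [/\ is_path tl hd x t q, uniq q, size q <= size p & {subset q <= p}].
Proof.
elim: p x => [|a p IH] x /=.
  by move=> H; exists [::]; split.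
case/andP => /eqP Ha Hp; have [q [Hq Uq Sq Subq]] := IH _ Hp.
case Haq: (a \in q).
  have [q1 [q2 Eq]] : exists q1 q2, q = q1 ++ a :: q2.
    move: Haq => /splitPr [q1 q2]; by exists q1, q2.
  exists (a :: q2); split.
  - by rewrite -Ha; apply: (@is_path_suffix (hd a) t q1 a q2); rewrite -Eq.
  - by move: Uq; rewrite Eq cat_uniq => /and3P[_ _ ->].
  - move: Sq; rewrite Eq size_cat /=; lia.
  - move=> b; rewrite inE => /orP[/eqP->|Hb]; first by rewrite inE eqxx.
    by rewrite inE Subq ?orbT // Eq mem_cat inE Hb !orbT.
exists (a :: q); split => /=.
- by rewrite Ha eqxx Hq.
- by rewrite Haq Uq.
- by [].
- by move=> b; rewrite !inE => /orP[->//|/Subq ->]; rewrite orbT.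
Qed.

Lemma is_path_map (W B : finType) (tl' hd' : B -> V) (F : W -> B) x t (p : seq W) :
  is_path tl' hd' x t (map F p) = is_path (tl' \o F) (hd' \o F) x t p.
Proof. by elim: p x => //= a p IH x; rewrite IH. Qed.
End Paths.

End M1.
Import M1.

Module M2.
Section SplitTr.
Variables (V B : finType) (tl hd : B -> V) (sa : B -> B).
Hypothesis sa_inv : involutive sa.
Hypothesis sa_nofix : forall b, sa b != b.

Definition sbit (p : seq B) (e : B) : bool :=
  (sa e \notin p) || (enum_rank e < enum_rank (sa e))%N.

Lemma reg_to_split (h : B -> nat) x t (p : seq B) :
  is_path tl hd x t p -> h_regular sa h p ->
  exists q : seq (B * bool), size q = size p /\
    [&& is_path (tlS tl) (hdS hd) x t q, all (fun e => 0 < splitcap h e) q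
      & regular (saS sa) q].
Proof.
move=> Hp /andP[Hpos Hmate].
exists (map (fun e => (e, sbit p e)) p); split; first by rewrite size_map.
apply/and3P; split.
- by rewrite is_path_map.
- apply/allP => E /mapP [e ep ->]; rewrite /splitcap /=.
  have he : 0 < h e by move/allP: Hpos => /(_ e ep).
  case sb: (sbit p e); first by case: (h e) he => [|n] //=; rewrite uphalfE.
  move: sb; rewrite /sbit => /negbT; rewrite negb_or negbK => /andP[sep _].
  move/allP: Hmate => /(_ e ep); rewrite sep /= => h2.
  by case: (h e) h2 => [|[|n]] //=; rewrite ?uphalfE.
- apply/allP => E /mapP [e ep ->]; rewrite /saS /=.
  apply/mapP => [[e' e'p [E1 E2]]].
  subst e'; move: E2; rewrite /sbit sa_inv ep e'p /= => E2.
  have ne : enum_rank e != enum_rank (sa e).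
    by apply/eqP => /enum_rank_inj Ee; move: (sa_nofix e); rewrite -Ee eqxx.
  by move: ne E2; rewrite neq_ltn; case: ltngtP.
Qed.

Lemma split_to_reg (h : B -> nat) x t (q : seq (B * bool)) :
  (forall e, h (sa e) = h e) ->
  [&& is_path (tlS tl) (hdS hd) x t q, all (fun e => 0 < splitcap h e) q
      & regular (saS sa) q] ->
  is_path tl hd x t (map fst q) && h_regular sa h (map fst q).
Proof.
move=> hsym /and3P[Hq Hcap Hreg]; apply/andP; split.
  by rewrite is_path_map.
apply/andP; split.
  apply/allP => e /mapP [[e' b] Eq ->] /=.
  move/allP: Hcap => /(_ _ Eq); rewrite /splitcap /=.
  by case: ifP => _; case: (h e') => [|[|n]].
apply/allP => e /mapP [[e' b] Eq ->] /=; apply/implyP => /mapP [[e2 b2] E2q /= Ee2].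
subst e2.
have bb : b2 != b.
  apply: contraTneq E2q => ->.
  by move/allP: Hreg => /(_ _ Eq).
move: bb Eq; case: b => /= bb Eq.
  have: b2 = false by move: bb; case: (b2).
  move=> Eb2; subst b2.
  move/allP: Hcap => /(_ _ E2q); rewrite /splitcap /= hsym.
  by case: (h e') => [|[|n]].
move/allP: Hcap => /(_ _ Eq); rewrite /splitcap /=.
by case: (h e') => [|[|n]].
Qed.
End SplitTr.

End M2.
Import M2.

Module M3.
Local Open Scope ring_scope.

Section Orient.
Variable N : eqType.
Definition contrib (e : N * N) (n : N) : int := (e.1 == n)%:R - (e.2 == n)%:R.
Definition sc (o : bool) (e : N * N) n : int := if o then contrib e n else - contrib e n.
Fixpoint netE (E : seq (N * N)%type) (os : seq bool) n : int :=
  match E, os with e :: E', o :: os' => sc o e n + netE E' os' n | _, _ => 0 end.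
Definition incident n (e : N * N) := (e.1 == n) || (e.2 == n).

Lemma netE_cat E1 E2 os1 os2 n : size os1 = size E1 ->
  netE (E1 ++ E2) (os1 ++ os2) n = netE E1 os1 n + netE E2 os2 n.
Proof.
elim: E1 os1 => [|e E1 IH] [|o os1] //=; first by rewrite add0r.
by case=> H; rewrite IH // addrA.
Qed.

Lemma netE_nohas E os n : ~~ has (incident n) E -> netE E os n = 0.
Proof.
elim: E os => [|[p q] E IH] [|o os] //=; rewrite negb_or => /andP[H1 H2].
rewrite IH // addr0 /sc /contrib /=; move: H1; rewrite /incident /= negb_or.
by case/andP => /negbTE -> /negbTE ->; case: o; rewrite ?subrr ?oppr0.
Qed.

Lemma contrib_bound e n : -1 <= contrib e n <= 1.
Proof. by rewrite /contrib; case: (e.1 == n); case: (e.2 == n). Qed.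

Lemma sc_bound o e n : -1 <= sc o e n <= 1.
Proof.
rewrite /sc; have := contrib_bound e n; case: o => //; lia.
Qed.

Lemma contrib0 e n : ~~ incident n e -> contrib e n = 0.
Proof. by rewrite /incident /contrib negb_or => /andP[/negbTE -> /negbTE ->]; rewrite subrr. Qed.

Lemma sc_split o w e : incident w e ->
  sc (if e.1 == w then ~~ o else o) e =1
  sc o ((if e.1 == w then e.2 else e.1), w).
Proof.
case: e => p q; rewrite /incident /= => H n; rewrite /sc /contrib /=.
case: eqP H => [->|/eqP pw] /= H.
  by case: o; rewrite ?opprB ?opprK.
by rewrite (eqP H).
Qed.

Lemma sc_split2 o w e : incident w e ->
  sc (if e.1 == w then o else ~~ o) e =1
  sc o (w, (if e.1 == w then e.2 else e.1)).
Proof.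
case: e => p q; rewrite /incident /= => H n; rewrite /sc /contrib /=.
case: eqP H => [->|/eqP pw] /= H //.
by rewrite (eqP H); case: o; rewrite ?opprB ?opprK.
Qed.

Lemma orient_aux k : forall E : seq (N * N)%type, (size E <= k)%N ->
  exists os, size os = size E /\ forall n, -1 <= netE E os n <= 1.
Proof.
elim: k => [|k IH] [|e E'] //=.
- by move=> _; exists [::]; split => // n; rewrite /= lerN10 ler01.
- by move=> _; exists [::]; split => // n; rewrite /= lerN10 ler01.
move=> HE.
case Hw: (has (incident e.1) E' || has (incident e.2) E').
  pose w := if has (incident e.1) E' then e.1 else e.2.
  have hw : has (incident w) E'.
    by rewrite /w; case: ifP => // /negbT H; move: Hw; rewrite (negbTE H).
  have ew : incident w e by rewrite /w /incident; case: ifP; rewrite eqxx ?orbT.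
  have [E2 [e2 [E3 [EE ie2]]]] : exists E2 e2 E3, E' = E2 ++ e2 :: E3 /\ incident w e2.
    case/hasP: hw => e2 /splitPr [E2 E3] ie2; by exists E2, e2, E3.
  pose u := if e.1 == w then e.2 else e.1.
  pose v := if e2.1 == w then e2.2 else e2.1.
  have [os'' [Hs Hb]] := IH ((u, v) :: E2 ++ E3) (ltac:(by move: HE; rewrite EE /= !size_cat /=; lia)).
  case: os'' Hs Hb => [|o os''] //= [] Hs Hb.
  pose os2 := take (size E2) os''; pose os3 := drop (size E2) os''.
  have Hs2 : size os2 = size E2 by by rewrite size_takel // Hs size_cat leq_addr.
  exists ((if e.1 == w then ~~ o else o) :: os2 ++ (if e2.1 == w then o else ~~ o) :: os3).
  split.
    by rewrite EE /= !size_cat /= size_drop Hs size_cat Hs2; congr (_.+1); lia.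
  have Eos : os'' = os2 ++ os3 by rewrite cat_take_drop.
  move=> n; have := Hb n; rewrite Eos netE_cat //.
  rewrite EE /= netE_cat //= (sc_split o ew) (sc_split2 o ie2) -/u -/v.
  suff -> : sc o (u, w) n + (netE E2 os2 n + (sc o (w, v) n + netE E3 os3 n)) =
            sc o (u, v) n + (netE E2 os2 n + netE E3 os3 n) by [].
  by rewrite /sc /contrib /=; case: (o); ring.
have [os' [Hs Hb]] := IH E' (ltac:(by move: HE; lia)).
exists (true :: os'); split; first by rewrite /= Hs.
move=> n /=.
case ien: (incident n e).
  have -> : netE E' os' n = 0.
    apply: netE_nohas; apply: contraFN Hw; case: e ien {HE} => p q.
    by rewrite /incident /= => /orP[/eqP ->|/eqP ->] ->; rewrite ?orbT.
  by rewrite addr0; apply: (sc_bound true).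
by rewrite /= contrib0 ?ien // add0r.
Qed.

Lemma orient (E : seq (N * N)%type) :
  exists os, size os = size E /\ forall n, -1 <= netE E os n <= 1.
Proof. exact: (@orient_aux (size E)). Qed.
End Orient.

End M3.
Import M3.

Module M4.
Local Open Scope ring_scope.

Lemma netE_map (N T : eqType) (F : T -> (N * N)%type) (sl : seq T) os n :
  uniq sl -> size os = size sl ->
  netE (map F sl) os n = \sum_(b <- sl) sc (nth false os (index b sl)) (F b) n.
Proof.
elim: sl os => [|a sl IH] [|o os] //=; first by rewrite big_nil.
move=> /andP[asl Usl] [Hs]; rewrite big_cons eqxx /= IH //; congr (_ + _).
apply: eq_big_seq => b bsl /=; case: eqP => // Eab.
by move: asl; rewrite Eab bsl.
Qed.

Section Round.
Variables (V B : finType) (tl hd : B -> V) (sv : V -> V) (sa : B -> B).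
Hypothesis skew : skew_symmetric tl hd sv sa.

Let sv_inv : involutive sv. Proof. by case: skew. Qed.
Let sv_nofix v : sv v != v. Proof. by case: skew. Qed.
Let sa_inv : involutive sa. Proof. by case: skew. Qed.
Let sa_nofix b : sa b != b. Proof. by case: skew. Qed.
Let tl_sa b : tl (sa b) = sv (hd b). Proof. by case: skew => _ _ _ _ /(_ b) []. Qed.
Let hd_sa b : hd (sa b) = sv (tl b). Proof. by case: skew => _ _ _ _ /(_ b) []. Qed.

Definition cls (v : V) : V := if (enum_rank v <= enum_rank (sv v))%N then v else sv v.

Lemma cls_sv v : cls (sv v) = cls v.
Proof.
rewrite /cls sv_inv.
have ne : enum_rank v != enum_rank (sv v).
  by apply/eqP => /enum_rank_inj Ee; move: (sv_nofix v); rewrite -Ee eqxx.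
by move: ne; rewrite neq_ltn; case: ltngtP.
Qed.

Lemma cls_eq p v : (cls p == cls v) = (p == v) || (p == sv v).
Proof.
apply/idP/idP.
  have cP z : cls z = z \/ cls z = sv z by rewrite /cls; case: ifP; [left|right].
  move=> H; case: (cP p) => Hp; case: (cP v) => Hv; move: H; rewrite Hp Hv => /eqP E.
  - by rewrite E eqxx.
  - by rewrite E eqxx orbT.
  - by rewrite -E sv_inv eqxx orbT.
  - by rewrite -[p]sv_inv E sv_inv eqxx.
by case/orP => /eqP ->; rewrite ?cls_sv eqxx.
Qed.

Lemma sv_eq p v : (sv p == v) = (p == sv v).
Proof. by apply/eqP/eqP => [<-|->]; rewrite sv_inv. Qed.

Lemma cls_int p v : ((p == v)%:R + (p == sv v)%:R : int) = (cls p == cls v)%:R.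
Proof.
rewrite cls_eq; case: (eqVneq p v) => [->|pv] /=.
  by rewrite eq_sym (negbTE (sv_nofix v)) addr0.
by rewrite add0r.
Qed.

Definition rep (b : B) : bool := (enum_rank b < enum_rank (sa b))%N.

Lemma rep_sa b : rep (sa b) = ~~ rep b.
Proof.
rewrite /rep sa_inv.
have ne : enum_rank b != enum_rank (sa b).
  by apply/eqP => /enum_rank_inj Ee; move: (sa_nofix b); rewrite -Ee eqxx.
by move: ne; rewrite neq_ltn; case: ltngtP.
Qed.

Definition W (v : V) (b : B) : int := (tl b == v)%:R - (hd b == v)%:R.

Lemma fv_sum (y : B -> nat) v :
  flow_value tl hd v y = \sum_b (y b)%:Z * W v b.
Proof.
rewrite /flow_value !(big_morph Posz PoszD (erefl _)) /=.
rewrite [X in X - _]big_mkcond [X in _ - X]big_mkcond /= -sumrB.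
apply: eq_bigr => b _; rewrite /W mulrBr.
by case: (tl b == v); case: (hd b == v); rewrite ?mulr1 ?mulr0.
Qed.

Variable x : B -> nat.
Hypothesis xsym : forall b, x (sa b) = x b.

Definition sl := [seq b <- index_enum B | rep b && odd (x b)].
Definition EE := map (fun b => (cls (tl b), cls (hd b))) sl.

Lemma sl_uniq : uniq sl.
Proof. by rewrite filter_uniq // index_enum_uniq. Qed.

Lemma sum_sl (G : B -> int) : \sum_(b <- sl) G b = \sum_(b | rep b && odd (x b)) G b.
Proof. by rewrite big_filter. Qed.

Variable os : seq bool.
Hypothesis os_size : size os = size EE.
Hypothesis os_bound : forall n, -1 <= netE EE os n <= 1.

Definition ob b := nth false os (index b sl).
Definition Or b := if rep b then ob b else ~~ ob (sa b).
Definition yr b := if Or b then uphalf (x b) else (x b)./2.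

Lemma Or_sa b : Or (sa b) = ~~ Or b.
Proof. rewrite /Or rep_sa sa_inv; by case: (rep b); rewrite ?negbK. Qed.

Lemma yr_sum b : (yr b + yr (sa b))%N = x b.
Proof.
rewrite /yr Or_sa xsym uphalf_half; case: (Or b) => /=;
  have := odd_double_half (x b); rewrite -addnn; lia.
Qed.

Definition dl b : int := if odd (x b) then (if Or b then 1 else -1) else 0.

Lemma dl_eq b : 2 * (yr b)%:Z - (x b)%:Z = dl b.
Proof.
rewrite /dl /yr uphalf_half; have := odd_double_half (x b); rewrite -addnn.
by case: (odd (x b)); case: (Or b) => /= H; lia.
Qed.

Lemma key v : 2 * flow_value tl hd v yr - flow_value tl hd v x = netE EE os (cls v).
Proof.
rewrite !fv_sum mulr_sumr -sumrB.
under eq_bigr => b _ do rewrite mulrA -mulrBl dl_eq.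
rewrite (bigID rep) /=.
rewrite [X in _ + X](reindex_inj (inv_inj sa_inv)) /=.
under [X in _ + X]eq_bigl => b do rewrite rep_sa negbK.
rewrite -big_split /=.
rewrite /EE netE_map ?sl_uniq ?os_size ?size_map // sum_sl.
rewrite (bigID (fun b => odd (x b))) /= [X in _ + X]big1 ?addr0; last first.
  by move=> b /andP[_ /negbTE ob]; rewrite /dl ob /= xsym ob !mul0r addr0.
apply: eq_bigr => b /andP[rb oddb].
rewrite /dl xsym oddb Or_sa /sc /contrib /= -/(ob b).
have -> : Or b = ob b by rewrite /Or rb.
rewrite /W tl_sa hd_sa !sv_eq -!cls_int.
by case: (ob b) => /=; ring.
Qed.

Lemma yr_cons v : flow_value tl hd v x = 0 -> flow_value tl hd v yr = 0.
Proof.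
move=> H; have := key v; rewrite H subr0 => E; have := os_bound (cls v).
rewrite -E; lia.
Qed.
End Round.


Lemma rounding (V B : finType) (tl hd : B -> V) (sv : V -> V) (sa : B -> B) (s : V)
  (x : B -> nat) :
  skew_symmetric tl hd sv sa -> (forall b, x (sa b) = x b) ->
  (forall v, v != s -> v != sv s -> flow_value tl hd v x = 0) ->
  exists y : B -> nat, (forall b, (y b + y (sa b))%N = x b) /\
    (forall v, v != s -> v != sv s -> flow_value tl hd v y = 0).
Proof.
move=> skew xsym xcons.
have [os [Hs Hb]] := orient (EE tl hd sv sa x).
exists (yr sa x os); split.
  by move=> b; apply: (yr_sum skew xsym Hs).
by move=> v vs vs'; apply: (yr_cons skew xsym Hs Hb); apply: xcons.
Qed.

End M4.
Import M4.

Module M5.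
Local Open Scope ring_scope.

Section Pot.
Variables (V B : finType) (tl hd : B -> V).
Variable y : B -> nat.
Variables (s t : V).

Fixpoint R (k : nat) (v : V) : bool :=
  if k is k'.+1 then R k' v || [exists b, [&& (0 < y b)%N, hd b == v & R k' (tl b)]]
  else v == s.

Lemma RS k v : R k.+1 v = R k v || [exists b, [&& (0 < y b)%N, hd b == v & R k (tl b)]].
Proof. by []. Qed.
Lemma R0 v : R 0 v = (v == s).
Proof. by []. Qed.
Arguments R : simpl never.

Lemma R_walk k v : R k v -> exists p, [/\ is_path tl hd s v p, all (fun b => 0 < y b)%N p
   & (size p <= k)%N].
Proof.
elim: k v => [|k IH] v; rewrite ?R0 ?RS.
  by move=> /eqP ->; exists [::]; split => //=.
case/orP => [/IH [p [H1 H2 H3]]|/existsP [b /and3P[yb /eqP hb Rk]]].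
  by exists p; split => //; apply: leq_trans H3 _.
have [p [H1 H2 H3]] := IH _ Rk.
exists (p ++ [:: b]); split.
- by rewrite is_path_cat; apply/existsP; exists (tl b); rewrite H1 /= eqxx hb eqxx.
- by rewrite all_cat H2 /= yb.
- by rewrite size_cat /= addn1.
Qed.

Lemma R_s k : R k s.
Proof. by elim: k => [|k IH]; rewrite ?R0 ?RS ?eqxx ?IH. Qed.

Variable D : nat.
Definition phi v : nat := \sum_(k < D) ~~ R k v.

Lemma phi_s : phi s = 0%N.
Proof. by rewrite /phi big1 // => k _; rewrite R_s. Qed.

Hypothesis far : forall p, is_path tl hd s t p -> all (fun b => 0 < y b)%N p -> (D <= size p)%N.

Lemma phi_t : phi t = D.
Proof.
rewrite /phi -[X in _ = X]card_ord -sum1_card; apply: eq_bigr => k _.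
case Rk: (R k t) => //=.
have [p [H1 H2 H3]] := R_walk Rk.
have := far H1 H2; have := ltn_ord k; lia.
Qed.

Lemma phi_edge b : (0 < y b)%N -> (phi (hd b) <= (phi (tl b)).+1)%N.
Proof.
move=> yb; rewrite /phi; case: D => [|D']; first by rewrite !big_ord0.
rewrite big_ord_recl big_ord_recr.
have H : (\sum_(i < D') ~~ R (bump 0 i) (hd b) <= \sum_(i < D') ~~ R i (tl b))%N.
  apply: leq_sum => k _; rewrite (_ : bump 0 k = k.+1) // RS.
  case Rt: (R k (tl b)); last by rewrite leq_b1.
  suff -> : [exists b0, [&& (0 < y b0)%N, hd b0 == hd b & R k (tl b0)]] by rewrite orbT.
  by apply/existsP; exists b; rewrite yb eqxx Rt.
apply: (leq_trans (leq_add (leq_b1 _) H)).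
by rewrite add1n ltnS leq_addr.
Qed.

Lemma sum_indic (F : V -> int) (w : V) : \sum_v F v * (w == v)%:R = F w.
Proof.
rewrite (bigD1 w) //= eqxx mulr1 big1 ?addr0 // => v /negbTE vw.
by rewrite eq_sym vw mulr0.
Qed.

Lemma sum_fv_phi : \sum_v (phi v)%:Z * flow_value tl hd v y =
   - \sum_b (y b)%:Z * ((phi (hd b))%:Z - (phi (tl b))%:Z).
Proof.
under eq_bigr => v _ do rewrite fv_sum mulr_sumr.
rewrite exchange_big /= -sumrN; apply: eq_bigr => b _.
under eq_bigr => v _ do rewrite /W mulrCA mulrBr.
rewrite -mulr_sumr sumrB (sum_indic (fun v => (phi v)%:Z)) (sum_indic (fun v => (phi v)%:Z)); ring.
Qed.

Lemma sum_fv : \sum_v flow_value tl hd v y = 0.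
Proof.
under eq_bigr => v _ do rewrite fv_sum.
rewrite exchange_big /= big1 // => b _.
under eq_bigr => v _ do rewrite /W mulrBr.
rewrite sumrB (sum_indic (fun _ => (y b)%:Z)) (sum_indic (fun _ => (y b)%:Z)).
by rewrite subrr.
Qed.

Hypothesis st : s != t.
Hypothesis cons : forall v, v != s -> v != t -> flow_value tl hd v y = 0.

Lemma potential : flow_value tl hd s y * D%:Z <= (\sum_b y b)%N%:Z.
Proof.
have E1 : \sum_v (phi v)%:Z * flow_value tl hd v y = D%:Z * flow_value tl hd t y.
  have ts : t != s by rewrite eq_sym.
  rewrite (bigD1 s) //= phi_s mul0r add0r (bigD1 t) ?ts //= phi_t big1 ?addr0 //.
  by move=> v /andP[vs vt]; rewrite cons ?mulr0.
have E2 : flow_value tl hd t y = - flow_value tl hd s y.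
  have ts : t != s by rewrite eq_sym.
  have := sum_fv; rewrite (bigD1 s) //= (bigD1 t) ?ts //= big1 ?addr0.
    by move/eqP; rewrite addrC addr_eq0 => /eqP.
  by move=> v /andP[vs vt]; rewrite cons.
have E3 : flow_value tl hd s y * D%:Z =
   \sum_b (y b)%:Z * ((phi (hd b))%:Z - (phi (tl b))%:Z).
  by rewrite -[RHS]opprK -sum_fv_phi E1 E2 mulrN opprK mulrC.
rewrite E3 (big_morph Posz PoszD (erefl _)); apply: ler_sum => b _.
case: (posnP (y b)) => [->|yb]; first by rewrite mul0r.
have := phi_edge yb; nia.
Qed.
End Pot.

End M5.
Import M5.

Module M6.
Local Open Scope ring_scope.

Section ML.
Variables (V B : finType) (tl hd : B -> V) (sv : V -> V) (sa : B -> B).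
Hypothesis skew : skew_symmetric tl hd sv sa.

Let sv_inv : involutive sv. Proof. by case: skew. Qed.
Let sv_nofix v : sv v != v. Proof. by case: skew. Qed.
Let sa_inv : involutive sa. Proof. by case: skew. Qed.
Let sa_nofix b : sa b != b. Proof. by case: skew. Qed.
Let tl_sa b : tl (sa b) = sv (hd b). Proof. by case: skew => _ _ _ _ /(_ b) []. Qed.
Let hd_sa b : hd (sa b) = sv (tl b). Proof. by case: skew => _ _ _ _ /(_ b) []. Qed.

Lemma fv_sa (y : B -> nat) v :
  flow_value tl hd v (fun b => y (sa b)) = - flow_value tl hd (sv v) y.
Proof.
rewrite !fv_sum (reindex_inj (inv_inj sa_inv)) /= -sumrN; apply: eq_bigr => b _.
rewrite sa_inv /W tl_sa hd_sa !(sv_eq skew) ; ring.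
Qed.

Lemma fv_add (y z : B -> nat) v :
  flow_value tl hd v (fun b => y b + z b)%N = flow_value tl hd v y + flow_value tl hd v z.
Proof.
rewrite !fv_sum -big_split /=; apply: eq_bigr => b _; rewrite PoszD; ring.
Qed.

Lemma ML (s : V) (h x : B -> nat) d :
  (forall b, x b <= h b)%N -> (forall b, x (sa b) = x b) ->
  (forall v, v != s -> v != sv s -> flow_value tl hd v x = 0) ->
  rdist_split tl hd sa sv h s = Some d ->
  flow_value tl hd s x * d%:Z <= (\sum_b x b)%N%:Z.
Proof.
move=> xh xsym xcons Hd.
have [y [Hy ycons]] := rounding skew xsym xcons.
have ss : s != sv s by rewrite eq_sym.
have far : forall p, is_path tl hd s (sv s) p -> all (fun b => 0 < y b)%N p -> (d <= size p)%N.
  move=> p Hp Hpos.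
  have Hreg : h_regular sa h p.
    apply/andP; split.
      apply/allP => b bp; move/allP: Hpos => /(_ b bp) yb.
      by apply: leq_trans (xh b); rewrite -Hy; apply: leq_trans yb (leq_addr _ _).
    apply/allP => b bp; apply/implyP => sbp.
    move/allP: (Hpos) => /(_ b bp) yb; move/allP: Hpos => /(_ _ sbp) ysb.
    apply: leq_trans (xh b); rewrite -Hy; lia.
  have [q [Hsq Pq]] := reg_to_split sa_inv sa_nofix Hp Hreg.
  have [_ Hmin] := mindist_some Hd.
  by rewrite -Hsq; apply: Hmin.
have Hpot := potential far ss ycons.
have Ex : x = fun b => (y b + y (sa b))%N.
  by apply: FunctionalExtensionality.functional_extensionality => b; rewrite Hy.
have Hsum : (\sum_b x b = 2 * \sum_b y b)%N.
  rewrite Ex big_split /= [X in (_ + X)%N](reindex_inj (inv_inj sa_inv)) /=.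
  under [X in (_ + X)%N]eq_bigr => b _ do rewrite sa_inv.
  by rewrite mul2n addnn.
have Hfv : flow_value tl hd s x = 2 * flow_value tl hd s y.
  rewrite Ex fv_add fv_sa.
  have := sum_fv tl hd y; rewrite (bigD1 s) //= (bigD1 (sv s)) ?sv_nofix //= big1 ?addr0.
    by move=> H; lia.
  by move=> v /andP[vs vs']; rewrite ycons.
rewrite Hfv Hsum PoszM -mulrA.
have H2 : (0 : int) <= 2 by [].
by rewrite ler_pM2l.
Qed.
End ML.

End M6.
Import M6.

Module M7.
Local Open Scope ring_scope.

Lemma sum_count_mem (T : finType) (p : seq T) : (\sum_e count_mem e p)%N = size p.
Proof.
elim: p => [|a p IH] /=; first by rewrite big1.
rewrite big_split /= IH (bigD1 a) //= eqxx big1 // => e /negbTE ea.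
by rewrite eq_sym ea.
Qed.

Lemma fv_path (V B : finType) (tl hd : B -> V) x t (p : seq B) v :
  is_path tl hd x t p ->
  flow_value tl hd v (fun e => count_mem e p) = (x == v)%:R - (t == v)%:R.
Proof.
elim: p x => [|a p IH] x /=.
  move=> /eqP ->; rewrite subrr fv_sum big1 // => b _; by rewrite mul0r.
case/andP => /eqP ta Hp; move: (IH _ Hp) => {IH}; rewrite !fv_sum => IH.
under eq_bigr => b _ do rewrite PoszD mulrDl.
rewrite big_split /= IH.
rewrite (bigD1 a) //= eqxx big1 ?addr0; last first.
  by move=> b /negbTE ab; rewrite eq_sym ab mul0r.
rewrite /W ta mul1r; ring.
Qed.

Section Plus.
Variables (V A : finType) (tl hd : A -> V) (sv : V -> V) (sa : A -> A).
Hypothesis skew : skew_symmetric tl hd sv sa.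

Lemma skewP : skew_symmetric (tlP tl hd) (hdP tl hd) sv (saP sa).
Proof.
case: skew => H1 H2 H3 H4 H5; split => //.
- by case=> a /=; rewrite H3.
- by case=> a /=; apply: contra (H4 a) => /eqP [->].
- by case=> a /=; have [? ?] := H5 a.
Qed.

Definition revP (e : A + A) : A + A := match e with inl a => inr a | inr a => inl a end.
Lemma revP_inv : involutive revP. Proof. by case. Qed.
Lemma revP_sa e : revP (saP sa e) = saP sa (revP e). Proof. by case: e. Qed.

Lemma W_rev v e : W (tlP tl hd) (hdP tl hd) v (revP e) = - W (tlP tl hd) (hdP tl hd) v e.
Proof. by case: e => a; rewrite /W /=; ring. Qed.

Lemma sum_W_revsym (m : A + A -> nat) v : (forall e, m (revP e) = m e) ->
  \sum_e (m e)%:Z * W (tlP tl hd) (hdP tl hd) v e = 0.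
Proof.
move=> msym; set S := \sum_e _.
have : S = - S.
  rewrite {1}/S (reindex_inj (inv_inj revP_inv)) /= -sumrN.
  by apply: eq_bigr => e _; rewrite msym W_rev mulrN.
lia.
Qed.
End Plus.

End M7.
Import M7.

Module M8.
Local Open Scope ring_scope.

Section Core.
Variables (V A : finType) (tl hd : A -> V) (sv : V -> V) (sa : A -> A).
Variables (u : A -> nat) (s : V) (f : A -> nat) (g : A + A -> nat).
Hypothesis skew : skew_symmetric tl hd sv sa.
Hypothesis usym : symmetric_fun sa u.
Hypothesis fIS : is_ISflow tl hd sv sa u s f.
Hypothesis gIS : is_ISflow (tlP tl hd) (hdP tl hd) sv (saP sa) (resid u f) s g.

Local Notation tlH := (tlP tl hd).
Local Notation hdH := (hdP tl hd).
Local Notation saH := (saP sa).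
Local Notation h := (resid u f).
Local Notation h' := (resid u (oplus f g)).

Let skewH := skewP skew.
Let sv_inv : involutive sv. Proof. by case: skew. Qed.
Let sv_nofix v : sv v != v. Proof. by case: skew. Qed.
Let saH_inv : involutive saH. Proof. by case: skewH. Qed.
Let saH_nofix b : saH b != b. Proof. by case: skewH. Qed.

Lemma f_le a : (f a <= u a)%N. Proof. by case: fIS. Qed.
Lemma f_sym a : f (sa a) = f a. Proof. by case: fIS. Qed.
Lemma g_le e : (g e <= h e)%N. Proof. by case: gIS. Qed.
Lemma g_sym e : g (saH e) = g e. Proof. by case: gIS. Qed.

Lemma h'_eq e : h' e = (h e - g e + g (revP e))%N.
Proof.
case: e => a /=; rewrite /oplus; have := f_le a; have := g_le (inl a);
have := g_le (inr a); rewrite /=; lia.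
Qed.

Lemma h_sym e : h (saH e) = h e.
Proof. by case: e => a /=; rewrite f_sym ?usym. Qed.

Lemma h'_sym e : h' (saH e) = h' e.
Proof. by rewrite !h'_eq h_sym g_sym revP_sa g_sym. Qed.

Lemma g_cons v : v != s -> v != sv s -> flow_value tlH hdH v g = 0.
Proof.
move=> vs vs'; case: gIS => _ _ /(_ v vs vs') H.
by rewrite /flow_value H subrr.
Qed.

Lemma posz_subn_min (a b : nat) : ((a - b)%N)%:Z = a%:Z - (minn a b)%:Z.
Proof. lia. Qed.

Variable P : seq (A + A).
Hypothesis HP : is_path tlH hdH s (sv s) P.
Hypothesis UP : uniq P.
Hypothesis RP : h_regular saH h' P.

Definition cc e := (count_mem e P + count_mem (saH e) P)%N.
Definition zz e := (g e + cc e)%N.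
Definition XX e := (zz e - zz (revP e))%N.

Lemma cc_le e : (cc e <= h' e)%N.
Proof.
move: RP => /andP[/allP Hpos /allP Hmate].
rewrite /cc !count_uniq_mem //.
case eP: (e \in P); case sP: (saH e \in P) => //=.
- by have := Hmate e eP; rewrite sP.
- by have := Hpos e eP.
- by rewrite -h'_sym; have := Hpos _ sP.
Qed.

Lemma cc_sym e : cc (saH e) = cc e.
Proof. by rewrite /cc saH_inv addnC. Qed.

Lemma XX_le e : (XX e <= h e)%N.
Proof.
have := cc_le e; rewrite h'_eq /XX /zz; have := g_le e; lia.
Qed.

Lemma XX_sym e : XX (saH e) = XX e.
Proof. by rewrite /XX revP_sa /zz !g_sym !cc_sym. Qed.

Lemma fv_cc v : flow_value tlH hdH v cc = 2 * ((s == v)%:R - (sv s == v)%:R).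
Proof.
rewrite /cc fv_add (fv_path v HP) (fv_sa skewH (fun e => count_mem e P)) (fv_path _ HP).
rewrite -(sv_eq skew s v) (sv_eq skew s (sv v)) sv_inv; ring.
Qed.

Lemma fv_XX v : flow_value tlH hdH v XX =
  flow_value tlH hdH v g + 2 * ((s == v)%:R - (sv s == v)%:R).
Proof.
have -> : flow_value tlH hdH v XX = flow_value tlH hdH v zz.
  rewrite !fv_sum.
  under eq_bigr => e _ do rewrite /XX posz_subn_min mulrBl.
  rewrite sumrB (@sum_W_revsym _ _ tl hd (fun e => minn (zz e) (zz (revP e))) v) ?subr0 //.
  by move=> e; rewrite revP_inv minnC.
by rewrite /zz fv_add fv_cc.
Qed.

Lemma XX_cons v : v != s -> v != sv s -> flow_value tlH hdH v XX = 0.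
Proof.
move=> vs vs'; rewrite fv_XX g_cons // eq_sym (negbTE vs) eq_sym (negbTE vs').
by rewrite /=; ring.
Qed.

Lemma sum_zz : (\sum_e zz e = \sum_e g e + 2 * size P)%N.
Proof.
rewrite /zz big_split /= /cc big_split /= sum_count_mem.
rewrite [X in (_ + (_ + X))%N](reindex_inj (inv_inj saH_inv)) /=.
under [X in (_ + (_ + X))%N]eq_bigr => e _ do rewrite saH_inv.
by rewrite sum_count_mem addnn mul2n.
Qed.

Lemma XX_le_zz e : (XX e <= zz e)%N.
Proof. by rewrite /XX leq_subr. Qed.

Variable d : nat.
Hypothesis Hd : rdist_split tlH hdH saH sv h s = Some d.
Hypothesis Hshort : shortest tlH hdH saH sv h s g.

Let Hml := ML skewH XX_le XX_sym XX_cons Hd.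

Let Hsg : ((\sum_e g e)%N%:Z = flow_value tlH hdH s g * d%:Z).
Proof. by move: Hshort; rewrite /shortest Hd. Qed.

Let fvXs : flow_value tlH hdH s XX = flow_value tlH hdH s g + 2.
Proof. by rewrite fv_XX eqxx (negbTE (sv_nofix s)) /=; ring. Qed.

Let SX_le : (\sum_e XX e <= \sum_e g e + 2 * size P)%N.
Proof. by rewrite -sum_zz; apply: leq_sum => e _; apply: XX_le_zz. Qed.

Lemma core_le : (d <= size P)%N.
Proof.
move: Hml SX_le Hsg; rewrite fvXs mulrDl.
set G := flow_value _ _ s g; set SX := (\sum_e XX e)%N; set Sg := (\sum_e g e)%N.
move=> H1 H2 H3; lia.
Qed.

Lemma sum_eq_le (T : finType) (F G : T -> nat) :
  (forall e, F e <= G e)%N -> (\sum_e F e = \sum_e G e)%N -> forall e, F e = G e.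
Proof.
move=> FG Hs e; apply/eqP; rewrite eqn_leq FG /= leqNgt; apply/negP => lt.
move: Hs; rewrite (bigD1 e) //= [in RHS](bigD1 e) //=.
have : (\sum_(i | i != e) F i <= \sum_(i | i != e) G i)%N by apply: leq_sum.
lia.
Qed.

Lemma core_block : size P = d ->
  ~ olt (Some d) (rdist_split tlH hdH saH sv (fun a => h a - g a)%N s).
Proof.
move=> HL.
have Heq : (\sum_e XX e = \sum_e zz e)%N.
  move: Hml SX_le Hsg; rewrite fvXs mulrDl sum_zz HL.
  set G := flow_value _ _ s g; set SX := (\sum_e XX e)%N; set Sg := (\sum_e g e)%N.
  move=> H1 H2 H3; lia.
have Hpt := sum_eq_le XX_le_zz Heq.
have cc_le' e : (cc e <= h e - g e)%N.
  have := Hpt e; have := cc_le e; rewrite h'_eq /XX /zz.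
  case: (posnP (g (revP e) + cc (revP e))%N) => H.
    have : g (revP e) = 0%N by lia.
    move=> ->; lia.
  lia.
have Hreg : h_regular saH (fun a => h a - g a)%N P.
  apply/andP; split.
    apply/allP => e eP; have := cc_le' e; rewrite /cc.
    have : (0 < count_mem e P)%N by rewrite count_uniq_mem // eP.
    by move=> H1 H2; apply: leq_trans H1 (leq_trans (leq_addr _ _) H2).
  apply/allP => e eP; apply/implyP => sP; have := cc_le' e; rewrite /cc !count_uniq_mem // eP sP.
  by [].
have [q [Hsq Pq]] := reg_to_split saH_inv saH_nofix HP Hreg.
have [n [Hn nle]] := @mindist_le _ (fun p : seq ((A + A) * bool)%type =>
  [&& is_path (tlS tlH) (hdS hdH) s (sv s) p,
      all (fun e => 0 < splitcap (fun a => h a - g a)%N e)%N p & regular (saS saH) p]) q Pq.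
rewrite /rdist_split Hn /=; apply/negP; rewrite -leqNgt.
by rewrite Hsq HL in nle.
Qed.
End Core.

End M8.
Import M8.


Lemma h_regular_sub (B : finType) (sa : B -> B) (h : B -> nat) (p q : seq B) :
  h_regular sa h p -> {subset q <= p} -> h_regular sa h q.
Proof.
move=> /andP[/allP H1 /allP H2] sub; apply/andP; split; apply/allP => e eq.
  exact: H1 (sub _ eq).
apply/implyP => se; have := H2 e (sub _ eq); by rewrite (sub _ se).
Qed.

Unset Implicit Arguments.
Theorem mainTheorem8 (V A : finType) (tl hd : A -> V) (sv : V -> V) (sa : A -> A)
  (u : A -> nat) (s : V) (f : A -> nat) (g : A + A -> nat) :
  skew_symmetric tl hd sv sa ->
  symmetric_fun sa u ->
  is_ISflow tl hd sv sa u s f ->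
  is_ISflow (tlP tl hd) (hdP tl hd) sv (saP sa) (resid u f) s g ->
  shortest (tlP tl hd) (hdP tl hd) (saP sa) sv (resid u f) s g ->
  ole (raug_dist tl hd sv sa u s f) (raug_dist tl hd sv sa u s (oplus f g)) /\
  (shortest_blocking (tlP tl hd) (hdP tl hd) (saP sa) sv (resid u f) s g ->
   olt (raug_dist tl hd sv sa u s f) (raug_dist tl hd sv sa u s (oplus f g))).
Proof.
move=> skew usym fIS gIS Hshort.
case Hd: (rdist_split (tlP tl hd) (hdP tl hd) (saP sa) sv (resid u f) s) => [d|]; last first.
  have g0 : forall e, g e = 0.
    move: Hshort; rewrite /shortest Hd => /eqP; rewrite sum_nat_eq0 => /forallP H e.
    by apply/eqP; apply: (implyP (H e)).
  have -> : oplus f g = f.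
    by apply: FunctionalExtensionality.functional_extensionality => a; rewrite /oplus !g0 addn0 subn0.
  split; first by case: (raug_dist tl hd sv sa u s f) => //= n.
  by rewrite /shortest_blocking Hd => -[].
have [[q [Pq Sq]] _] := mindist_some Hd.
have Hq := split_to_reg (h_sym usym fIS) Pq.
have [k [Hk kle]] := @mindist_le _ (fun p : seq (A + A)%type =>
    is_path (tlP tl hd) (hdP tl hd) s (sv s) p && h_regular (saP sa) (resid u f) p) _ Hq.
rewrite size_map Sq in kle.
rewrite /raug_dist Hk.
case Hk': (mindist _) => [k'|] //.
have [[p [Pp Sp]] _] := mindist_some Hk'.
case/andP: Pp => Pp Rp.
have [p' [Pp' Up' Sp' Subp']] := shortcut Pp.
have Rp' := h_regular_sub Rp Subp'.
have Hle := core_le skew usym fIS gIS Pp' Up' Rp' Hd Hshort.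
split; first by rewrite /ole -Sp; apply: leq_trans kle (leq_trans Hle Sp').
move=> [_ Hb] /=.
have Hlt : (d < size p')%N.
  rewrite ltn_neqAle.
  rewrite Hle.
  rewrite andbT.
  apply/negP => /eqP Ed.
  by apply: (core_block skew usym fIS gIS Pp' Up' Rp' Hd Hshort (esym Ed)); rewrite -Hd.
rewrite /olt -Sp; apply: leq_ltn_trans kle (leq_trans Hlt Sp').
Qed.
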